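(* Let $1\le k<m$ and let $H$ be a $k$-uniform hypergraph on $m$ vertices that is non-empty (has at least one edge) and non-complete (does not contain all $k$-subsets as edges). Then the number of automorphisms of $H$ satisfies $|\mathrm{Aut}(H)|\le \dfrac{m!}{m-k+1}$.
   Context: A hypergraph $H=(V,E)$ is $k$-uniform if every edge $e\in E$ is a subset of $V$ of size exactly $k$. An automorphism of $H$ is a permutation $\pi$ of $V$ such that $\{\pi(e):e\in E\}=E$; $\mathrm{Aut}(H)$ is the set of all automorphisms. *)

(* Defs.v *)
From mathcomp Require Import all_boot all_fingroup.
Local Open Scope nat_scope.
Set Implicit Arguments. Unset Strict Implicit. Unset Printing Implicit Defensive.

Definition k_uniform (m k : nat) (E : {set {set 'I_m}}) : Prop :=
  forall e, e \in E -> #|e| = k.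

Definition hypAut (m : nat) (E : {set {set 'I_m}}) : {set {perm 'I_m}} :=
  [set pi : {perm 'I_m} | imset (fun e : {set 'I_m} => [set pi x | x in e]) (mem E) == E].

(* Main.v *)
Require Import Defs.
From mathcomp Require Import all_boot all_fingroup.
From mathcomp Require Import zify.
Set Implicit Arguments. Unset Strict Implicit. Unset Printing Implicit Defensive.

Definition act m (pi : {perm 'I_m}) (F : {set {set 'I_m}}) := imset (fun e : {set 'I_m} => pi @: e) (mem F).

Lemma hypAutP m (E : {set {set 'I_m}}) g : (g \in hypAut E) = (act g E == E).
Proof. by rewrite inE. Qed.

Lemma actM m (g s : {perm 'I_m}) F : act (g * s)%g F = act s (act g F).
Proof.
rewrite /act -imset_comp; apply: eq_imset => e /=.
by rewrite -imset_comp; apply: eq_imset => x /=; rewrite permM.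
Qed.

Lemma actL m (s : {perm 'I_m}) (S : {set 'I_m}) E z :
  {in S, forall u, s u = u} -> (z |: S \in act s E) = ((s^-1)%g z |: S \in E).
Proof.
move=> fix_s.
have -> : z |: S = s @: ((s^-1)%g z |: S).
  by rewrite imsetU1 permKV (eq_in_imset fix_s) imset_id.
by rewrite /act mem_imset //; apply: imset_inj; apply: perm_inj.
Qed.

Lemma step2 m k (E : {set {set 'I_m}}) : k_uniform k E ->
  forall n e f, (#|e :\: f| <= n)%N -> e \in E -> f \notin E -> #|f| = k ->
  exists (S : {set 'I_m}) a b, [/\ a \notin S, b \notin S, #|S| = k.-1%N, a |: S \in E & b |: S \notin E].
Proof.
move=> ku; elim=> [|n IH] e f hn eE fE fk.
  have : e \subset f by rewrite -setD_eq0 -cards_eq0; move: hn; rewrite leqn0.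
  move=> sub; have : e = f.
    apply/eqP; rewrite eqEcard sub fk (ku _ eE). by rewrite leqnn.
  by move=> efeq; rewrite -efeq eE in fE.
have ek := ku _ eE.
case: (leqP #|e :\: f| 1) => h1.
  have ne0 : #|e :\: f| != 0.
    apply/negP; rewrite cards_eq0 setD_eq0 => sub.
    have : e = f by apply/eqP; rewrite eqEcard sub fk ek leqnn.
    by move=> efeq; rewrite -efeq eE in fE.
  have c1 : #|e :\: f| == 1 by rewrite eqn_leq h1 lt0n ne0.
  have c2 : #|f :\: e| == 1.
    by move: c1; rewrite !cardsD setIC ek fk.
  case/cards1P: c1 => a Ha; case/cards1P: c2 => b Hb.
  have ISk : #|e :&: f| = k.-1.
    move: (cardsD e f); rewrite Ha cards1 ek => H.
    have : #|e :&: f| <= k by rewrite -ek subset_leq_card // subsetIl.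
    lia.
  exists (e :&: f), a, b; split => //.
  - by have /setP/(_ a) := Ha; rewrite !inE eqxx; case: (a \in e); case: (a \in f).
  - by have /setP/(_ b) := Hb; rewrite !inE eqxx; case: (b \in e); case: (b \in f).
  - suff -> : a |: e :&: f = e by [].
    apply/setP => z; have /setP/(_ z) := Ha; rewrite !inE.
    by case: (z == a) => //=; case: (z \in e); case: (z \in f).
  - suff -> : b |: e :&: f = f by [].
    apply/setP => z; have /setP/(_ z) := Hb; rewrite !inE.
    by case: (z == b) => //=; case: (z \in e); case: (z \in f).
have c2 : #|f :\: e| = #|e :\: f| by rewrite !cardsD setIC ek fk.
have [x xin] : exists x, x \in e :\: f.
  by apply/set0Pn; rewrite -cards_eq0; apply/eqP; lia.
have [y yin] : exists y, y \in f :\: e.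
  by apply/set0Pn; rewrite -cards_eq0; apply/eqP; lia.
move: (xin) (yin); rewrite !inE => /andP [xf xe] /andP [ye yf].
set g := y |: (e :\ x).
have gk : #|g| = k.
  rewrite cardsU1 !inE (negbTE ye) andbF /=.
  have := cardsD1 x e; rewrite xe ek => ->; by [].
case: (boolP (g \in E)) => gE.
  apply: (IH g f _ gE fE fk).
  have sub : g :\: f \subset (e :\: f) :\ x.
    apply/subsetP => z; rewrite !inE.
    case: (z =P y) => [->|_] /=; first by rewrite yf.
    by case: (z \in f); case: (z == x); case: (z \in e).
  have := subset_leq_card sub; have := cardsD1 x (e :\: f); rewrite xin; lia.
apply: (IH e g _ eE gE gk).
have sub : e :\: g \subset [set x].
  apply/subsetP => z; rewrite !inE.
  by case: (z == y); case: (z == x); case: (z \in e).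
have := subset_leq_card sub; rewrite cards1; lia.
Qed.
Definition sig m (P : {set 'I_m}) (a b x : 'I_m) : {perm 'I_m} :=
  if x \in P then (if x == a then tperm a a else tperm x b) else tperm a x.

Lemma key_aux m (P : {set 'I_m}) a b x y : a \in P -> b \notin P -> x != y ->
  x \in P ->
  (forall z, (sig P a b x z \in P) = (sig P a b y z \in P)) -> False.
Proof.
move=> aP bP xy xP H.
have ba : b != a by apply: contraNneq bP => ->.
rewrite /sig xP in H.
case: (x =P a) => [xa | xna] in H.
  subst x; rewrite tperm1 in H.
  case: (boolP (y \in P)) => yP in H.
    rewrite eq_sym (negbTE xy) in H.
    by move: (H b); rewrite perm1 tpermR yP (negbTE bP).
  by move: (H a); rewrite perm1 tpermL aP (negbTE yP).
have xb : x != b by apply: contraNneq bP => <-.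
have xa : x != a by apply/eqP.
case: (boolP (y \in P)) => yP in H.
  case: (y =P a) => [ya | yna] in H.
    by move: (H b); rewrite tpermR tperm1 perm1 xP (negbTE bP).
  by move: (H x); rewrite tpermL (negbTE bP) tpermD ?xP // eq_sym.
by move: (H a); rewrite tpermL (negbTE yP) tpermD ?aP // eq_sym.
Qed.

Lemma key m (P : {set 'I_m}) a b x y : a \in P -> b \notin P -> x != y ->
  (forall z, (sig P a b x z \in P) = (sig P a b y z \in P)) -> False.
Proof.
move=> aP bP xy H.
case: (boolP (x \in P)) => xP; first exact: (key_aux aP bP xy xP H).
case: (boolP (y \in P)) => yP.
  apply: (@key_aux m P a b y x aP bP _ yP); [by rewrite eq_sym | by move=> z; rewrite H].
have xa : a != x by apply: contraNneq xP => <-.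
move: (H x); rewrite /sig (negbTE xP) (negbTE yP) tpermR tpermD ?aP ?(negbTE xP) //; by rewrite eq_sym.
Qed.

Lemma sigV m (P : {set 'I_m}) a b x : ((sig P a b x)^-1)%g = sig P a b x.
Proof. by rewrite /sig; case: ifP => _; [case: ifP => _|]; rewrite tpermV. Qed.

Theorem theorem3p4 (m k : nat) (E : {set {set 'I_m}}) :
  1 <= k -> k < m ->
  k_uniform k E ->
  E != set0 ->
  (exists e : {set 'I_m}, #|e| = k /\ e \notin E) ->
  #|hypAut E| * (m - k + 1) <= m`!.
Proof.
move=> k1 km ku En0 [f0 [f0k f0E]].
have [e0 e0E] := set0Pn _ En0.
have [S [a [b [aS bS Sk aE bE]]]] := step2 ku (leqnn #|e0 :\: f0|) e0E f0E f0k.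
set P := [set z | z |: S \in E].
have aP : a \in P by rewrite inE.
have bP : b \notin P by rewrite inE.
set T := ~: S.
set G := hypAut E.
pose F := fun p : {perm 'I_m} * 'I_m => (p.1 * sig P a b p.2)%g.
have fixS : forall x, x \in T -> {in S, forall u, sig P a b x u = u}.
  move=> x xT u uS.
  have ua : a != u by apply: contraNneq aS => ->.
  have ub : b != u by apply: contraNneq bS => ->.
  have ux : x != u by apply/eqP => xu; move: xT; rewrite xu inE uS.
  by rewrite /sig; case: ifP => _; [case: ifP => _|]; rewrite tpermD.
have actE : forall g s, g \in G -> act (g * s)%g E = act s E.
  by move=> g s gG; rewrite actM; move: gG; rewrite hypAutP => /eqP ->.
have inj : {in setX G T &, injective F}.
  move=> [g x] [h y] /setXP [gG xT] /setXP [hG yT] eq.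
  have xy : x = y.
    case: (x =P y) => // /eqP nxy; exfalso; apply: (key aP bP nxy) => z.
    have : (z |: S \in act (g * sig P a b x)%g E) = (z |: S \in act (h * sig P a b y)%g E).
      by rewrite /F /= in eq; rewrite eq.
    by rewrite !actE // (actL E z (fixS x xT)) (actL E z (fixS y yT)) !sigV !inE.
  subst y; congr pair; apply: (mulIg (sig P a b x)); exact: eq.
have cT : #|T| = m - k + 1.
  rewrite /T; have := cardsC S; rewrite card_ord Sk; lia.
rewrite -cT -cardsX -(card_in_imset inj); apply: leq_trans (max_card _) _.
by rewrite card_Sn.
Qed.
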